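(* Let $G$ be a finite abelian group and let $1\leq p,q\leq 2$. Let $\Sigma\subset\widehat{G}$ satisfy the $(p,q)$-restriction estimate with constant $\rho_{p,q}(\Sigma)$, i.e. $$\Bigl(\sum_{\chi\in\Sigma}|\widehat f(\chi)|^q\Bigr)^{1/q}\leq \rho_{p,q}(\Sigma)\Bigl(\sum_{x\in G}|f(x)|^p\Bigr)^{1/p}\quad\text{for all } f:G\to\mathbb{C}.$$ Let $S\subset G$ be such that $\rho_{p,q}(\Sigma)\,|S|^{1/p}<|G|^{\frac1q-\frac12}$. Then $(S,\Sigma)$ is a strong annihilating pair: for every $f:G\to\mathbb{C}$, $$\|f\|_{L^2(G)}\leq A_{ann}(S,\Sigma)\bigl(\|f\|_{L^2(G\setminus S)}+\|\widehat f\|_{L^2(\widehat G\setminus\Sigma)}\bigr),\qquad A_{ann}(S,\Sigma)=1+\frac{|S|^{1/2}\,|\widehat G\setminus\Sigma|^{\frac1q-\frac12}}{|G|^{\frac1q-\frac12}-\rho_{p,q}(\Sigma)|S|^{1/p}}.$$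
   Context: $G$ and $\widehat G$ (the group of characters $\chi:G\to\{|z|=1\}$) are equipped with counting measure, $|\cdot|$ denotes cardinality, and $|\widehat G|=|G|$. The Fourier transform is $\widehat f(\chi)=|G|^{-1/2}\sum_{x\in G}f(x)\overline{\chi(x)}$, which is unitary $L^2(G)\to L^2(\widehat G)$. All $L^r$ norms are with respect to counting measure. *)

(* Defs.v *)
From mathcomp Require Import all_boot all_order all_algebra.
From mathcomp Require Import reals exp complex.
Set Implicit Arguments. Unset Strict Implicit. Unset Printing Implicit Defensive.
Import Order.TTheory GRing.Theory Num.Theory.
Local Open Scope ring_scope.

Definition cabs (R : realType) (z : R[i]) : R := ComplexField.Normc.normc z.

Definition is_character (R : realType) (G : finZmodType) (chi : G -> R[i]) :=
  (forall x y : G, chi (x + y) = chi x * chi y) /\ (forall x : G, cabs (chi x) = 1).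

Definition enumerates_dual (R : realType) (G : finZmodType) (ghat : seq {ffun G -> R[i]}) :=
  uniq ghat /\ forall chi : {ffun G -> R[i]}, chi \in ghat <-> is_character chi.

Definition fourier (R : realType) (G : finZmodType) (f : G -> R[i]) (chi : G -> R[i]) : R[i] :=
  (real_complex R ((Num.sqrt (#|G|%:R : R))^-1)) * \sum_(x : G) f x * (chi x)^*.

Definition LnormG (R : realType) (G : finZmodType) (r : R) (D : {pred G}) (f : G -> R[i]) : R :=
  (\sum_(x in D) cabs (f x) `^ r) `^ r^-1.

Definition LnormD (R : realType) (G : finZmodType) (r : R) (ghat : seq {ffun G -> R[i]})
    (P : {pred {ffun G -> R[i]}}) (F : {ffun G -> R[i]} -> R[i]) : R :=
  (\sum_(chi <- ghat | P chi) cabs (F chi) `^ r) `^ r^-1.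

Definition restriction_estimate (R : realType) (G : finZmodType) (ghat : seq {ffun G -> R[i]})
    (Sigma : {pred {ffun G -> R[i]}}) (p q rho : R) :=
  forall f : G -> R[i],
    LnormD q ghat Sigma (fun chi => fourier f chi) <= rho * LnormG p [pred x | true] f.

(* Main.v *)
Require Import Defs.
From mathcomp Require Import all_boot all_order all_algebra all_fingroup.
From mathcomp Require Import reals exp complex.
From mathcomp Require Import ring lra zify.
Import Order.TTheory GRing.Theory Num.Theory.
Local Open Scope ring_scope.

Lemma young1 (R : realType) (b t : R) : 0 <= b -> 0 < t <= 1 ->
  b `^ t <= t * b + (1 - t).
Proof.
move=> b0 /andP[t0 t1].
have [->|t1'] := eqVneq t 1; first by rewrite powRr1 // mul1r subrr addr0.
have t1lt : t < 1 by rewrite lt_neqAle t1' t1.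
have q0 : 0 < 1 - t by rewrite subr_gt0.
have tp : 0 < t^-1 by rewrite invr_gt0.
have qp : 0 < (1 - t)^-1 by rewrite invr_gt0.
have := @conjugate_powR R (b `^ t) 1 (t^-1) ((1 - t)^-1) (powR_ge0 _ _) ler01 tp qp.
rewrite !invrK addrC subrK => /(_ erefl).
rewrite mulr1 -powRrM mulfV ?gt_eqF // powRr1 // powR1.
by rewrite mul1r mulrC.
Qed.

Lemma sum_const_seq (R : realType) (I : Type) (r : seq I) (c : R) :
  \sum_(i <- r) c = c *+ size r.
Proof. by elim: r => [|x r IH]; rewrite ?big_nil ?big_cons ?IH ?mulrS. Qed.

Lemma le_sum_seq (R : realType) (I : eqType) (s : seq I) (a : I -> R) i :
  (forall j, 0 <= a j) -> i \in s -> a i <= \sum_(j <- s) a j.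
Proof.
move=> a0; elim: s => [//|x s IH]; rewrite in_cons big_cons => /orP[/eqP ->|/IH h].
  by rewrite lerDl sumr_ge0.
by rewrite (le_trans h) // lerDr.
Qed.

Lemma pm_seq (R : realType) (I : eqType) (s : seq I) (a : I -> R) (t : R) :
  (forall i, 0 <= a i) -> 0 < t <= 1 ->
  \sum_(i <- s) a i `^ t <= (size s)%:R `^ (1 - t) * (\sum_(i <- s) a i) `^ t.
Proof.
move=> a0 /andP[t0 t1].
set S := \sum_(i <- s) a i.
have S0 : 0 <= S by apply: sumr_ge0.
have [Se0|Sn0] := eqVneq S 0.
  rewrite big_seq (eq_bigr (fun=> 0)) ?big1 ?mulr_ge0 ?powR_ge0 // => i si.
  have : a i <= 0 by rewrite -Se0 le_sum_seq.
  move=> h; have -> : a i = 0 by apply/eqP; rewrite eq_le h a0.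
  by rewrite powR0 // gt_eqF.
have Spos : 0 < S by rewrite lt_neqAle eq_sym Sn0 S0.
have sz : (0 < size s)%N.
  by move: Sn0; rewrite /S; case: (s) => //; rewrite big_nil eqxx.
set K : R := (size s)%:R.
have Kpos : 0 < K by rewrite ltr0n.
set lam := S / K.
have lpos : 0 < lam by rewrite divr_gt0.
have key : forall i, a i `^ t <= lam `^ t * (t * (a i / lam) + (1 - t)).
  move=> i; have {1}-> : a i = lam * (a i / lam) by rewrite mulrC mulfVK ?gt_eqF.
  rewrite powRM; last 2 first; [exact: ltW|exact: divr_ge0 (a0 i) (ltW lpos)|].
  rewrite ler_wpM2l ?powR_ge0 // young1 //; first exact: divr_ge0 (a0 i) (ltW lpos).
  by rewrite t0 t1.
apply: (le_trans (ler_sum _ (fun i _ => key i))).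
rewrite -mulr_sumr big_split /= -mulr_sumr sum_const_seq -mulr_suml.
rewrite -/S -/K.
have -> : t * (S / lam) + (1 - t) *+ size s = K.
  rewrite /lam -mulr_natr -/K; field.
  by rewrite !gt_eqF.
have Kv0 : 0 <= K^-1 by rewrite invr_ge0 ltW.
rewrite /lam (powRM _ (ltW Spos) Kv0).
have KV : (K^-1) `^ t = (K `^ t)^-1.
  apply: (@mulfI _ (K `^ t)); first by rewrite gt_eqF // powR_gt0.
  by rewrite -powRM ?invr_ge0 ?ltW // mulfV ?gt_eqF // powR1 mulfV // gt_eqF // powR_gt0.
rewrite KV powRD; last by rewrite (gt_eqF Kpos) implybT.
rewrite (powRr1 (ltW Kpos)) powRN.
by rewrite mulrAC [in X in _ <= X]mulrC mulrA.
Qed.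

Lemma pm_pred (R : realType) (I : eqType) (r : seq I) (P : pred I) (a : I -> R) (t : R) :
  (forall i, 0 <= a i) -> 0 < t <= 1 ->
  \sum_(i <- r | P i) a i `^ t <= (count P r)%:R `^ (1 - t) * (\sum_(i <- r | P i) a i) `^ t.
Proof.
move=> a0 t01; rewrite -(big_filter r P (fun i => a i `^ t)) -(big_filter r P a) -size_filter.
exact: pm_seq.
Qed.

Lemma powR_subadd (R : realType) (a b t : R) : 0 <= a -> 0 <= b -> 0 < t <= 1 ->
  (a + b) `^ t <= a `^ t + b `^ t.
Proof.
move=> a0 b0 /andP[t0 t1].
have [e0|sn0] := eqVneq (a + b) 0.
  move: e0 => /eqP; rewrite paddr_eq0 // => /andP[/eqP -> /eqP ->].
  by rewrite addr0 powR0 ?gt_eqF // addr0.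
set s := a + b.
have spos : 0 < s by rewrite lt_neqAle eq_sym sn0 addr_ge0.
have aux : forall x, 0 <= x -> x <= s -> x / s <= (x / s) `^ t.
  move=> x x0 xs; have [->|xn0] := eqVneq x 0; first by rewrite mul0r powR_ge0.
  apply: ger1_powR => //; rewrite divr_gt0 ?(lt_neqAle 0 x) 1?eq_sym ?xn0 //=.
  by rewrite ler_pdivrMr // mul1r.
have -> : a `^ t + b `^ t = s `^ t * ((a / s) `^ t + (b / s) `^ t).
  have s0 := ltW spos.
  rewrite mulrDr -(powRM _ s0 (divr_ge0 a0 s0)) -(powRM _ s0 (divr_ge0 b0 s0)).
  by rewrite !(mulrC s) !mulfVK ?gt_eqF.
rewrite -[X in X <= _]mulr1 ler_wpM2l ?powR_ge0 //.
apply: le_trans (lerD (aux a a0 _) (aux b b0 _)); last by rewrite lerDr.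
  by rewrite -mulrDl mulfV ?gt_eqF.
by rewrite lerDl.
Qed.


Lemma CS_seq (R : realType) (I : Type) (r : seq I) (P : pred I) (x y : I -> R) :
  (\sum_(i <- r | P i) x i * y i) ^+ 2 <=
  (\sum_(i <- r | P i) x i ^+ 2) * (\sum_(i <- r | P i) y i ^+ 2).
Proof.
rewrite expr2 big_distrl /= big_distrl /=.
under eq_bigr do rewrite big_distrr /=.
under [X in _ <= X]eq_bigr do rewrite big_distrr /=.
set L := (X in X <= _); set Rh := (X in _ <= X).
have RE : Rh = \sum_(i <- r | P i) \sum_(j <- r | P j) x j ^+ 2 * y i ^+ 2.
  by rewrite /Rh exchange_big.
suff h : L + L <= Rh + Rh by lra.
rewrite {2}RE -big_split /= -big_split /=.
apply: ler_sum => i _; rewrite -!big_split /=; apply: ler_sum => j _.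
have := sqr_ge0 (x i * y j - x j * y i).
rewrite -subr_ge0; move=> h; nra.
Qed.


Lemma mink_seq (R : realType) (I : Type) (r : seq I) (P : pred I) (x y z : I -> R) :
  (forall i, 0 <= x i) -> (forall i, 0 <= y i) -> (forall i, 0 <= z i) ->
  (forall i, z i <= x i + y i) ->
  Num.sqrt (\sum_(i <- r | P i) z i ^+ 2) <=
  Num.sqrt (\sum_(i <- r | P i) x i ^+ 2) + Num.sqrt (\sum_(i <- r | P i) y i ^+ 2).
Proof.
move=> x0 y0 z0 zxy.
set X := \sum_(i <- r | P i) x i ^+ 2; set Y := \sum_(i <- r | P i) y i ^+ 2.
have X0 : 0 <= X by apply: sumr_ge0 => i _; apply: sqr_ge0.
have Y0 : 0 <= Y by apply: sumr_ge0 => i _; apply: sqr_ge0.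
have cs : \sum_(i <- r | P i) x i * y i <= Num.sqrt X * Num.sqrt Y.
  rewrite -sqrtrM // (le_trans (ler_norm _)) // -sqrtr_sqr ler_sqrt ?mulr_ge0 //.
  exact: CS_seq.
rewrite -[X in _ <= X]ger0_norm ?addr_ge0 ?sqrtr_ge0 // -sqrtr_sqr ler_sqrt ?sqr_ge0 //.
apply: (@le_trans _ _ (\sum_(i <- r | P i) (x i + y i) ^+ 2)).
  apply: ler_sum => i _; rewrite ler_sqr ?nnegrE ?addr_ge0 //.
rewrite (eq_bigr (fun i => x i ^+ 2 + y i ^+ 2 + (x i * y i) *+ 2)); last first.
  by move=> i _; rewrite sqrrD; ring.
rewrite !big_split /= -/X -/Y sqrrD !sqr_sqrtr //.
rewrite !mulr2n; lra.
Qed.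

Set Implicit Arguments. Unset Strict Implicit. Unset Printing Implicit Defensive.
Local Open Scope complex_scope.
Local Open Scope ring_scope.

Lemma cabsE (R : realType) (z : R[i]) : (cabs z)%:C = `|z|.
Proof. by case: z => a b; rewrite normc_def. Qed.

Lemma cabs_ge0 (R : realType) (z : R[i]) : 0 <= cabs z.
Proof. by case: z => a b; exact: sqrtr_ge0. Qed.

Lemma cabsM (R : realType) (x y : R[i]) : cabs (x * y) = cabs x * cabs y.
Proof. exact: ComplexField.Normc.normcM. Qed.

Lemma cabsD (R : realType) (x y : R[i]) : cabs (x + y) <= cabs x + cabs y.
Proof. exact: le_normcD. Qed.

Lemma cabs0 (R : realType) : cabs (0 : R[i]) = 0.
Proof. exact: ComplexField.Normc.normc0. Qed.

Lemma cabs1 (R : realType) : cabs (1 : R[i]) = 1.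
Proof. exact: ComplexField.Normc.normc1. Qed.

Lemma cabs_eq0 (R : realType) (z : R[i]) : (cabs z == 0) = (z == 0).
Proof.
apply/eqP/eqP => [/ComplexField.Normc.eq0_normc //|->]; exact: cabs0.
Qed.

Lemma cabs_conj (R : realType) (z : R[i]) : cabs (z^*) = cabs z.
Proof. by apply: complexI; rewrite !cabsE norm_conjC. Qed.

Lemma cabsX (R : realType) (z : R[i]) n : cabs (z ^+ n) = cabs z ^+ n.
Proof. by elim: n => [|n IH]; rewrite ?expr0 ?cabs1 // !exprS cabsM IH. Qed.

Lemma cabs_real (R : realType) (c : R) : 0 <= c -> cabs (c%:C) = c.
Proof. by move=> c0; rewrite /cabs /= expr0n addr0 sqrtr_sqr ger0_norm. Qed.

Lemma cabs_sum (R : realType) (I : Type) (r : seq I) (P : pred I) (F : I -> R[i]) :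
  cabs (\sum_(i <- r | P i) F i) <= \sum_(i <- r | P i) cabs (F i).
Proof.
exact: (@ler_norm_sum R (Rcomplex R) I r F P).
Qed.

Lemma cabs_sqr (R : realType) (z : R[i]) : ((cabs z) ^+ 2)%:C = z * z^*.
Proof. by rewrite -normCK -cabsE rmorphXn. Qed.

Lemma char_neq0 (R : realType) (G : finZmodType) (chi : G -> R[i]) x :
  is_character chi -> chi x != 0.
Proof.
by case=> _ h; rewrite -cabs_eq0 h oner_eq0.
Qed.

Lemma char0 (R : realType) (G : finZmodType) (chi : G -> R[i]) :
  is_character chi -> chi 0 = 1.
Proof.
move=> hc; have := hc.1 0 0; rewrite addr0 => h.
apply: (mulfI (char_neq0 0 hc)); by rewrite mulr1 -h.
Qed.

Lemma char_unit (R : realType) (G : finZmodType) (chi : G -> R[i]) x :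
  is_character chi -> chi x * (chi x)^* = 1.
Proof.
by move=> hc; rewrite -cabs_sqr hc.2 expr1n.
Qed.

Lemma char_conj (R : realType) (G : finZmodType) (chi : G -> R[i]) x :
  is_character chi -> (chi x)^* = chi (- x).
Proof.
move=> hc; apply: (mulfI (char_neq0 x hc)).
by rewrite char_unit // -hc.1 subrr char0.
Qed.

Lemma char_mul (R : realType) (G : finZmodType) (chi psi : G -> R[i]) :
  is_character chi -> is_character psi -> is_character (fun x => chi x * psi x).
Proof.
move=> [h1 h2] [k1 k2]; split => [x y|x]; first by rewrite h1 k1; ring.
by rewrite cabsM h2 k2 mulr1.
Qed.

Lemma char_neg (R : realType) (G : finZmodType) (chi : G -> R[i]) :
  is_character chi -> is_character (fun x => chi (- x)).
Proof.
by move=> [h1 h2]; split => [x y|x]; rewrite ?opprD ?h1.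
Qed.

Lemma char_sum_nt (R : realType) (G : finZmodType) (chi : G -> R[i]) y :
  is_character chi -> chi y != 1 -> \sum_x chi x = 0.
Proof.
move=> hc hy.
have e : \sum_x chi x = chi y * \sum_x chi x.
  rewrite {1}(reindex_inj (addIr y)) /= mulr_sumr.
  by apply: eq_bigr => x _; rewrite hc.1 mulrC.
have : (1 - chi y) * \sum_x chi x = 0 by rewrite mulrBl mul1r -e subrr.
by move/eqP; rewrite mulf_eq0 subr_eq0 eq_sym (negbTE hy) /= => /eqP.
Qed.

Lemma char_orth (R : realType) (G : finZmodType) (chi psi : {ffun G -> R[i]}) :
  is_character chi -> is_character psi ->
  \sum_x chi x * (psi x)^* = if chi == psi then #|G|%:R else 0.
Proof.
move=> hc hp; case: eqP => [<-|/eqP ne].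
  rewrite (eq_bigr (fun=> 1)) => [|x _]; last exact: char_unit.
  by rewrite sumr_const.
have [y hy] : exists y, chi y != psi y.
  apply/existsP; move: ne; apply: contraR; rewrite negb_exists => /forallP h.
  by apply/eqP/ffunP => x; apply/eqP; move: (h x); rewrite negbK.
under eq_bigr do rewrite char_conj //.
apply: (char_sum_nt (y := y)); first exact: char_mul hc (char_neg hp).
rewrite -char_conj //; apply: contra hy => /eqP h.
by rewrite -[chi y]mulr1 -(char_unit y hp) mulrCA h mulr1.
Qed.
Lemma zh1 (G : zmodType) (x a b : G) : (x - a) - (x - b) = b - a.
Proof. by rewrite opprB addrC addrA subrK. Qed.
Lemma zh2 (G : zmodType) (x y a b : G) : x + y - (a + b) = (x - a) + (y - b).
Proof. by rewrite opprD addrACA. Qed.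
Lemma zh3 (G : zmodType) (x y a b : G) : x - y - (a - b) = (x - a) - (y - b).
Proof. by rewrite !opprB [LHS]addrACA [RHS]addrACA [- y + _]addrC. Qed.
Lemma zh4 (G : zmodType) (x y a b c : G) : x - y - (a + c - b) = (x - a) - (y - b) - c.
Proof. by rewrite [a + c - b]addrAC opprD addrA zh3. Qed.
Lemma zh5 (G : zmodType) (x y a b c : G) : x + y - (a + b - c) = (x - a) + (y - b) + c.
Proof. by rewrite -zh2 opprB addrA addrAC. Qed.

Definition zcl (G : finZmodType) (H : {set G}) :=
  0 \in H /\ forall x y, x \in H -> y \in H -> x - y \in H.

Definition pchar (R : realType) (G : finZmodType) (H : {set G}) (chi : G -> R[i]) :=
  (forall x y, x \in H -> y \in H -> chi (x + y) = chi x * chi y) /\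
  (forall x, x \in H -> cabs (chi x) = 1).

Lemma zclN (G : finZmodType) (H : {set G}) x : zcl H -> x \in H -> - x \in H.
Proof. by move=> [h0 hB] hx; rewrite -sub0r hB. Qed.

Lemma zclD (G : finZmodType) (H : {set G}) x y : zcl H -> x \in H -> y \in H -> x + y \in H.
Proof. by move=> hH hx hy; rewrite -[y]opprK hH.2 // zclN. Qed.

Lemma order_ex (G : finZmodType) (H : {set G}) (g : G) : zcl H ->
  exists m, [/\ (0 < m)%N, g *+ m \in H & forall k, (0 < k < m)%N -> g *+ k \notin H].
Proof.
move=> hH.
have exP : exists n, (0 < n)%N && (g *+ n \in H).
  exists #[g]%g; rewrite order_gt0 /=.
  have := expg_order g; rewrite FinRing.zmodXgE FinRing.zmod1gE => ->; exact: hH.1.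
case: (ex_minnP exP) => m /andP[m0 hm] hmin.
exists m; split => // k /andP[k0 km]; apply/negP => hk.
by have := hmin k; rewrite k0 hk => /(_ isT); rewrite leqNgt km.
Qed.

Lemma extend (R : realType) (G : finZmodType) (H : {set G}) (chi : G -> R[i]) (g : G) m (w : R[i]) :
  zcl H -> pchar H chi -> (0 < m)%N -> g *+ m \in H ->
  (forall k, (0 < k < m)%N -> g *+ k \notin H) ->
  w ^+ m = chi (g *+ m) -> cabs w = 1 ->
  exists (H' : {set G}) (chi' : G -> R[i]), [/\ zcl H', pchar H' chi', H \subset H', g \in H' &
     ({in H, chi' =1 chi} /\ chi' g = (if m == 1%N then chi g else w))].
Proof.
move=> hH [hM hN] m0 gm hmin wm w1.
have uniqk : forall x k k', (k < m)%N -> (k' < m)%N -> x - g *+ k \in H -> x - g *+ k' \in H -> k = k'.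
  move=> x; suff W : forall k k', (k <= k')%N -> (k' < m)%N -> x - g *+ k \in H ->
      x - g *+ k' \in H -> k = k'.
    move=> k k' km k'm h1 h2; case: (leqP k k') => kk.
      exact: W.
    by apply/esym/W => //; apply: ltnW.
  move=> k k' kk k'm h1 h2.
  have : g *+ (k' - k) \in H.
    by rewrite mulrnBr // -(zh1 x (g *+ k)); exact: hH.2.
  case: (ltnP 0 (k' - k)) => [pos|]; last first.
    by rewrite leqn0 subn_eq0 => kk' _; apply/eqP; rewrite eqn_leq kk kk'.
  by move=> hin; have := hmin (k' - k)%N; rewrite pos hin /= => /(_ (leq_ltn_trans (leq_subr _ _) k'm)).
pose H' := [set x | [exists k : 'I_m, x - g *+ k \in H]].
pose chi' := fun x => if [pick k : 'I_m | x - g *+ k \in H] is Some k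
                      then chi (x - g *+ k) * w ^+ k else 1.
have chi'E : forall x k, (k < m)%N -> x - g *+ k \in H -> chi' x = chi (x - g *+ k) * w ^+ k.
  move=> x k km hk; rewrite /chi'; case: pickP => [k' hk'|none].
    by rewrite (uniqk x k' k) // ltn_ord.
  by have := none (Ordinal km); rewrite hk.
have inH' : forall x, x \in H' -> exists2 k, (k < m)%N & x - g *+ k \in H.
  by move=> x; rewrite inE => /existsP[k hk]; exists k => //; apply: ltn_ord.
have inH'2 : forall x k, (k < m)%N -> x - g *+ k \in H -> x \in H'.
  by move=> x k km hk; rewrite inE; apply/existsP; exists (Ordinal km).
have gmE : forall k, g *+ (m + k) = g *+ m + g *+ k by move=> k; rewrite mulrnDr.
exists H', chi'; split.
- split; first by apply: (inH'2 0 0%N m0); rewrite mulr0n subrr; exact: hH.1.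
  move=> x y /inH'[k km hk] /inH'[k' k'm hk'].
  case: (leqP k' k) => kk.
    apply: (inH'2 _ (k - k')%N); first by rewrite (leq_ltn_trans (leq_subr _ _)).
    by rewrite mulrnBr // zh3; exact: hH.2.
  apply: (inH'2 _ (k + m - k')%N); first by lia.
  rewrite mulrnBr; last by lia.
  rewrite mulrnDr zh4.
  exact: hH.2 _ _ (hH.2 _ _ hk hk') gm.
- split => [x y /inH'[k km hk] /inH'[k' k'm hk']|x /inH'[k km hk]]; last first.
    by rewrite (chi'E x k) // cabsM cabsX hN // w1 expr1n mulr1.
  rewrite (chi'E x k) // (chi'E y k') //.
  case: (ltnP (k + k') m) => kk.
    rewrite (chi'E (x + y) (k + k')%N) //; last first.
      by rewrite mulrnDr zh2 zclD.
    rewrite mulrnDr zh2.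
    by rewrite hM // exprD; ring.
  have jm : (k + k' - m < m)%N by lia.
  have e : x + y - g *+ (k + k' - m) = (x - g *+ k) + (y - g *+ k') + g *+ m.
    by rewrite mulrnBr // mulrnDr zh5.
  rewrite (chi'E (x + y) (k + k' - m)%N) //; last by rewrite e; exact: zclD hH (zclD hH hk hk') gm.
  rewrite e hM ?(zclD hH hk hk') // hM // -wm -mulrA -exprD subnKC //.
  by rewrite exprD; ring.
- apply/subsetP => x hx; apply: (inH'2 x 0%N m0); by rewrite mulr0n subr0.
- case: (posnP m.-1) => [m1|m1].
    have em : m = 1%N by rewrite -(prednK m0) m1.
    by apply: (inH'2 g 0%N m0); rewrite mulr0n subr0 -[g]mulr1n -{1}em.
  have m1' : (1 < m)%N by rewrite -(prednK m0) ltnS.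
  by apply: (inH'2 g 1%N m1'); rewrite mulr1n subrr; exact: hH.1.
split; first by move=> x hx; rewrite (chi'E x 0%N) // ?mulr0n ?subr0 ?expr0 ?mulr1.
  case: eqP => [em|/eqP mn1].
    have hg : g \in H by rewrite -[g]mulr1n -em.
    by rewrite (chi'E g 0%N m0) ?mulr0n ?subr0 ?expr0 ?mulr1.
  have m1' : (1 < m)%N by rewrite ltn_neqAle eq_sym mn1 m0.
  rewrite (chi'E g 1%N m1') ?mulr1n ?subrr ?expr1 ?hH.1 //.
  have := hM 0 0 hH.1 hH.1; rewrite addr0 => h.
  have c0 : chi 0 = 1.
    have nz : chi 0 != 0 by rewrite -cabs_eq0 hN ?oner_eq0 // hH.1.
    by apply: (mulfI nz); rewrite mulr1 -h.
  by rewrite c0 mul1r.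
Qed.
Lemma nt_root (R : realType) m : (1 < m)%N -> exists w : R[i], w ^+ m = 1 /\ w != 1.
Proof.
move=> m1.
have pm : (0 < m.-1)%N by lia.
have [x hx] := @solve_monicpoly R[i] m.-1 (fun=> -1) pm.
have hs : \sum_(i < m) x ^+ i = 0.
  rewrite -(prednK (ltnW m1)) big_ord_recr /= hx.
  by rewrite -big_split /= big1 // => i _; rewrite mulN1r subrr.
exists x; split.
  by apply/eqP; rewrite -subr_eq0 subrX1 hs mulr0.
apply/eqP => e; move: hs; rewrite e.
under eq_bigr do rewrite expr1n.
by rewrite sumr_const card_ord => /eqP; rewrite pnatr_eq0; lia.
Qed.

Lemma cabs1_of_pow (R : realType) (w : R[i]) m : (0 < m)%N -> cabs (w ^+ m) = 1 -> cabs w = 1.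
Proof.
by move=> m0; rewrite cabsX => /eqP; rewrite pexpr_eq1 ?cabs_ge0 // => /eqP.
Qed.

Lemma sep_gen (R : realType) (G : finZmodType) (z : G) : z != 0 -> forall s : seq G,
  exists (H : {set G}) (chi : G -> R[i]),
    [/\ zcl H, pchar H chi, z \in H, chi z != 1 & {subset s <= H}].
Proof.
move=> z0; elim => [|a s [H [chi [hH hc zH cz sH]]]].
  pose H0 : {set G} := [set 0].
  have hH0 : zcl H0.
    by split; rewrite ?set11 // => x y; rewrite !inE => /eqP -> /eqP ->; rewrite subrr.
  have hc0 : pchar H0 (fun=> (1 : R[i])) by split => *; rewrite ?mulr1 ?cabs1.
  have [m [m0 zm zmin]] := order_ex z hH0.
  have m1 : (1 < m)%N.
    rewrite ltn_neqAle m0 andbT; apply/eqP => em; move: zm; rewrite -em mulr1n inE.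
    by rewrite (negbTE z0).
  have [w [wm w1]] := nt_root R m1.
  have cw : cabs w = 1 by apply: (cabs1_of_pow (ltnW m1)); rewrite wm cabs1.
  have [H' [chi' [hH' hc' _ zH' [_ e]]]] := extend hH0 hc0 m0 zm zmin wm cw.
  exists H', chi'; split => //.
  by rewrite e gtn_eqF.
have [m [m0 am amin]] := order_ex a hH.
have [w [wm cw]] : exists w : R[i], w ^+ m = chi (a *+ m) /\ cabs w = 1.
  exists (m.-root (chi (a *+ m))); rewrite rootCK //; split => //.
  by apply: (cabs1_of_pow m0); rewrite rootCK // hc.2.
have [H' [chi' [hH' hc' sub aH' [ee _]]]] := extend hH hc m0 am amin wm cw.
exists H', chi'; split => //.
- exact: (subsetP sub).
- by rewrite ee.
- move=> x; rewrite inE => /orP[/eqP -> //|xs].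
  exact: (subsetP sub) (sH x xs).
Qed.

Lemma sep (R : realType) (G : finZmodType) (z : G) : z != 0 ->
  exists chi : {ffun G -> R[i]}, is_character chi /\ chi z != 1.
Proof.
move=> z0; have [H [chi [_ [hM hN] _ cz sH]]] := sep_gen R z0 (enum G).
have all : forall x, x \in H by move=> x; apply: sH; rewrite mem_enum.
exists [ffun x => chi x]; split; last by rewrite ffunE.
by split => [x y|x]; rewrite !ffunE ?hM ?hN.
Qed.
Lemma sum_const_pred (V : nmodType) (I : Type) (r : seq I) (P : pred I) (c : V) :
  \sum_(i <- r | P i) c = c *+ count P r.
Proof.
elim: r => [|x r IH]; first by rewrite big_nil.
by rewrite big_cons /=; case: (P x); rewrite IH ?mulrS ?add0n.
Qed.

Lemma sum_ifeq (V : nmodType) (I : eqType) (r : seq I) (t : I) (c : V) :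
  \sum_(i <- r) (if i == t then c else 0) = c *+ count_mem t r.
Proof.
elim: r => [|x r IH]; first by rewrite big_nil.
by rewrite big_cons /= IH; case: (x == t); rewrite ?mulrS ?add0n ?add0r.
Qed.

Lemma ghat_char (R : realType) (G : finZmodType) (ghat : seq {ffun G -> R[i]}) (chi : {ffun G -> R[i]}) :
  enumerates_dual ghat -> chi \in ghat -> is_character chi.
Proof. by move=> [_ h] /h. Qed.

Lemma char_in (R : realType) (G : finZmodType) (ghat : seq {ffun G -> R[i]}) (chi : {ffun G -> R[i]}) :
  enumerates_dual ghat -> is_character chi -> chi \in ghat.
Proof. by move=> [_ h] /h. Qed.

Lemma triv_char (R : realType) (G : finZmodType) :
  is_character ([ffun _ => 1] : {ffun G -> R[i]}).
Proof. split => [x y|x]; rewrite !ffunE ?mulr1 //; exact: ComplexField.Normc.normc1. Qed.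

Lemma ffun_char (R : realType) (G : finZmodType) (f : G -> R[i]) :
  is_character f -> is_character [ffun x => f x].
Proof. by move=> [h1 h2]; split => [x y|x]; rewrite !ffunE ?h1 ?h2. Qed.

Lemma Dsum (R : realType) (G : finZmodType) (ghat : seq {ffun G -> R[i]}) z :
  enumerates_dual ghat ->
  \sum_(chi <- ghat) chi z = if z == 0 then (size ghat)%:R else 0.
Proof.
move=> Hd; case: eqP => [->|/eqP z0].
  rewrite big_seq (eq_bigr (fun=> 1)) => [|chi hchi]; last first.
    exact: char0 (ghat_char Hd hchi).
  by rewrite -big_seq -(big_filter _ predT) sum_const_pred count_predT filter_predT.
have [psi [hpsi pz]] := sep R z0.
pose f := fun chi : {ffun G -> R[i]} => ([ffun x => psi x * chi x] : {ffun G -> R[i]}).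
have fch : forall chi : {ffun G -> R[i]}, is_character chi -> is_character (f chi).
  move=> chi hc; exact: (ffun_char (char_mul hpsi hc)).
have finj : injective f.
  move=> a b /ffunP h; apply/ffunP => x; have := h x; rewrite /f !ffunE.
  move=> e; apply: (mulfI (char_neq0 x hpsi)); exact: e.
have pe : perm_eq ghat (map f ghat).
  apply: uniq_perm; [exact: Hd.1|by rewrite map_inj_uniq //; exact: Hd.1|].
  move=> x; apply/idP/idP => [hx|/mapP[chi hchi ->]]; last first.
    by apply: (char_in Hd); apply: fch; exact: (ghat_char Hd hchi).
  apply/mapP; exists ([ffun y => psi (- y) * x y] : {ffun G -> R[i]}).
    apply: (char_in Hd); apply: ffun_char; apply: char_mul; first exact: char_neg.
    exact: (ghat_char Hd hx).
  apply/ffunP => y; rewrite !ffunE mulrA -hpsi.1 subrr char0 ?mul1r //.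
have e : \sum_(chi <- ghat) chi z = psi z * \sum_(chi <- ghat) chi z.
  rewrite {1}(perm_big _ pe) big_map mulr_sumr.
  by apply: eq_bigr => chi _; rewrite ffunE.
have : (1 - psi z) * \sum_(chi <- ghat) chi z = 0 by rewrite mulrBl mul1r -e subrr.
by move/eqP; rewrite mulf_eq0 subr_eq0 eq_sym (negbTE pz) /= => /eqP.
Qed.

Lemma N_eq (R : realType) (G : finZmodType) (ghat : seq {ffun G -> R[i]}) :
  enumerates_dual ghat -> size ghat = #|G|.
Proof.
move=> Hd.
pose t : {ffun G -> R[i]} := [ffun _ => 1 : R[i]].
have tin : t \in ghat by apply: char_in Hd (triv_char R G).
have e1 : \sum_(chi <- ghat) \sum_x chi x = (size ghat)%:R.
  rewrite exchange_big /= (bigD1 0) //= Dsum // eqxx big1 ?addr0 //.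
  by move=> x /negbTE hx; rewrite Dsum // hx.
have e2 : \sum_(chi <- ghat) \sum_x chi x = (#|G|%:R : R[i]).
  rewrite (eq_big_seq (fun chi => if chi == t then #|G|%:R else 0)); last first.
    move=> chi hchi; rewrite -(char_orth (ghat_char Hd hchi) (triv_char R G)).
    by apply: eq_bigr => x _; rewrite ffunE conjC1 mulr1.
  by rewrite sum_ifeq (count_uniq_mem t Hd.1) tin.
by apply/eqP; rewrite -(eqr_nat R[i]) -e1 e2.
Qed.

Lemma Dsum2 (R : realType) (G : finZmodType) (ghat : seq {ffun G -> R[i]}) z :
  enumerates_dual ghat ->
  \sum_(chi <- ghat) chi z = if z == 0 then #|G|%:R else 0.
Proof. by move=> Hd; rewrite Dsum // N_eq. Qed.
Lemma realC_sum (R : realType) (I : Type) (r : seq I) (F : I -> R) :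
  (\sum_(i <- r) F i)%:C = \sum_(i <- r) (F i)%:C.
Proof. by rewrite rmorph_sum. Qed.

Lemma realC_sqr (R : realType) (I : Type) (r : seq I) (F : I -> R[i]) :
  (\sum_(i <- r) cabs (F i) ^+ 2)%:C = \sum_(i <- r) F i * (F i)^*.
Proof. rewrite rmorph_sum /=; apply: eq_bigr => i _; by rewrite cabs_sqr. Qed.

Lemma realC_mul (R : realType) (x y : R) : x%:C * y%:C = (x * y)%:C.
Proof. by rewrite rmorphM. Qed.

Lemma realC_nat (R : realType) n : (n%:R : R)%:C = n%:R.
Proof. by rewrite rmorph_nat. Qed.

Lemma realC_conj (R : realType) (x : R) : (x%:C)^* = x%:C.
Proof. by apply/conj_Creal/complex_realP; exists x. Qed.

Lemma card_pos (G : finZmodType) : (0 < #|G|)%N.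
Proof. by apply/card_gt0P; exists 0. Qed.

Lemma key_orth (R : realType) (G : finZmodType) (ghat : seq {ffun G -> R[i]}) (a b : G -> R[i]) :
  enumerates_dual ghat ->
  \sum_(chi <- ghat) (\sum_x a x * (chi x)^*) * (\sum_y b y * chi y) =
  #|G|%:R * \sum_x a x * b x.
Proof.
move=> Hd.
under eq_bigr do rewrite big_distrl /=.
rewrite exchange_big /= mulr_sumr; apply: eq_bigr => x _.
under eq_bigr do rewrite big_distrr /=.
rewrite exchange_big /= (bigD1 x) //= [X in _ + X]big1 ?addr0; last first.
  move=> y hy.
  rewrite (eq_big_seq (fun chi : {ffun G -> R[i]} => a x * b y * chi (y - x))); last first.
    move=> chi hchi; have hc := ghat_char Hd hchi.
    rewrite char_conj // [y - x]addrC hc.1; ring.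
  by rewrite -mulr_sumr Dsum2 // subr_eq0 (negbTE hy) mulr0.
rewrite (eq_big_seq (fun chi : {ffun G -> R[i]} => a x * b x)); last first.
  move=> chi hchi; rewrite mulrACA [_^* * _]mulrC.
  by rewrite (char_unit x (ghat_char Hd hchi)) mulr1.
by rewrite sum_const_pred count_predT N_eq // mulr_natl.
Qed.

Lemma four_inv (R : realType) (G : finZmodType) (ghat : seq {ffun G -> R[i]}) (g : G -> R[i]) x :
  enumerates_dual ghat ->
  \sum_(chi <- ghat) fourier g chi * chi x =
    ((Num.sqrt (#|G|%:R : R))^-1)%:C * (#|G|%:R * g x).
Proof.
move=> Hd.
have e1 : \sum_y g y * (if y == x then 1 else 0) = g x.
  rewrite (bigD1 x) //= eqxx mulr1 big1 ?addr0 // => y /negbTE ->.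
  by rewrite mulr0.
have e2 : forall chi : {ffun G -> R[i]}, \sum_y (if y == x then 1 else 0) * chi y = chi x.
  move=> chi; rewrite (bigD1 x) //= eqxx mul1r big1 ?addr0 // => y /negbTE ->.
  by rewrite mul0r.
have := key_orth g (fun y => if y == x then 1 else 0) Hd.
rewrite e1 => <-; rewrite mulr_sumr; apply: eq_bigr => chi _.
by rewrite /fourier -mulrA e2.
Qed.

Lemma sqrt_nat_pos (R : realType) (G : finZmodType) : 0 < Num.sqrt (#|G|%:R : R).
Proof. by rewrite sqrtr_gt0 ltr0n card_pos. Qed.

Lemma sqrt_nat_inv (R : realType) (G : finZmodType) :
  (Num.sqrt (#|G|%:R : R))^-1 * #|G|%:R = Num.sqrt (#|G|%:R : R).
Proof.
have s0 := sqrt_nat_pos R G.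
apply: (@mulfI _ (Num.sqrt (#|G|%:R : R))); first by rewrite gt_eqF.
by rewrite mulrA mulfV ?gt_eqF // mul1r -expr2 sqr_sqrtr // ler0n.
Qed.

Lemma four_inv_bound (R : realType) (G : finZmodType) (ghat : seq {ffun G -> R[i]}) (g : G -> R[i]) x :
  enumerates_dual ghat ->
  Num.sqrt (#|G|%:R : R) * cabs (g x) <= \sum_(chi <- ghat) cabs (fourier g chi).
Proof.
move=> Hd.
have s0 := sqrt_nat_pos R G.
have e : \sum_(chi <- ghat) cabs (fourier g chi) =
         \sum_(chi <- ghat) cabs (fourier g chi * chi x).
  by apply: eq_big_seq => chi hchi; rewrite cabsM (ghat_char Hd hchi).2 mulr1.
rewrite e; apply: le_trans (cabs_sum _ _ _).
rewrite four_inv // !cabsM cabs_real ?invr_ge0 ?sqrtr_ge0 // -realC_nat cabs_real ?ler0n //.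
by rewrite mulrA sqrt_nat_inv.
Qed.

Lemma plancherel (R : realType) (G : finZmodType) (ghat : seq {ffun G -> R[i]}) (h : G -> R[i]) :
  enumerates_dual ghat ->
  \sum_(chi <- ghat) cabs (fourier h chi) ^+ 2 = \sum_x cabs (h x) ^+ 2.
Proof.
move=> Hd; apply: complexI; rewrite !realC_sqr.
set c := ((Num.sqrt (#|G|%:R : R))^-1)%:C.
have cj : forall chi : {ffun G -> R[i]}, (fourier h chi)^* = c * \sum_y (h y)^* * chi y.
  move=> chi; rewrite /fourier rmorphM /= realC_conj rmorph_sum /=; congr (_ * _).
  by apply: eq_bigr => y _; rewrite rmorphM /= conjCK.
under eq_bigr do rewrite cj /fourier -/c mulrACA.
rewrite -mulr_sumr (key_orth h (fun y => (h y)^*) Hd) mulrA.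
have -> : c * c * #|G|%:R = 1.
  rewrite /c realC_mul -realC_nat realC_mul -mulrA sqrt_nat_inv mulVf //.
  by rewrite gt_eqF // sqrt_nat_pos.
by rewrite mul1r.
Qed.
Lemma exists_max (R : realType) (I : finType) (P : pred I) (F : I -> R) i0 :
  P i0 -> exists2 i, P i & forall j, P j -> F j <= F i.
Proof.
move=> Pi0; case: (arg_maxP F Pi0) => i Pi hmax; exists i => // j Pj.
Qed.

Lemma L2_sqrt (R : realType) (I : Type) (r : seq I) (P : pred I) (F : I -> R) :
  (forall i, 0 <= F i) ->
  (\sum_(i <- r | P i) F i `^ 2) `^ 2^-1 = Num.sqrt (\sum_(i <- r | P i) F i ^+ 2).
Proof.
move=> F0; rewrite powR12_sqrt; last by apply: sumr_ge0 => i _; exact: powR_ge0.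
by congr Num.sqrt; apply: eq_bigr => i _; rewrite powR_mulrn.
Qed.

Lemma step_i (R : realType) (G : finZmodType) (ghat : seq {ffun G -> R[i]}) (g : G -> R[i]) x q :
  enumerates_dual ghat -> 1 <= q <= 2 ->
  (#|G|%:R : R) `^ (q^-1 - 2^-1) * cabs (g x) <=
  (\sum_(chi <- ghat) cabs (fourier g chi) `^ q) `^ q^-1.
Proof.
move=> Hd /andP[q1 q2].
have q0 : 0 < q by apply: lt_le_trans q1.
set n := (#|G|%:R : R).
have n0 : 0 < n by rewrite ltr0n card_pos.
set Lq := (\sum_(chi <- ghat) cabs (fourier g chi) `^ q) `^ q^-1.
have h1 := four_inv_bound g x Hd.
have h2 : \sum_(chi <- ghat) cabs (fourier g chi) <= n `^ (1 - q^-1) * Lq.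
  have := pm_seq R _ ghat (fun chi => cabs (fourier g chi) `^ q) (q^-1)
            (fun i => powR_ge0 _ _).
  rewrite invr_gt0 q0 invf_le1 // q1 => /(_ isT).
  rewrite (N_eq Hd) -/n.
  under eq_bigr do rewrite -powRrM mulfV ?gt_eqF // powRr1 ?cabs_ge0 //.
  by [].
have e : n `^ (1 - q^-1) = Num.sqrt n * (n `^ (q^-1 - 2^-1))^-1.
  rewrite -powRN -(powR12_sqrt (ltW n0)) -powRD; last by rewrite (gt_eqF n0) implybT.
  congr (_ `^ _); lra.
have sn0 : 0 < Num.sqrt n by rewrite sqrtr_gt0.
have na0 : 0 < n `^ (q^-1 - 2^-1) by rewrite powR_gt0.
have h3 : Num.sqrt n * cabs (g x) <= Num.sqrt n * ((n `^ (q^-1 - 2^-1))^-1 * Lq).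
  by rewrite mulrA -e; exact: le_trans h1 h2.
rewrite ler_pM2l // in h3.
have := ler_wpM2l (ltW na0) h3.
by rewrite mulrA mulfV ?gt_eqF // mul1r.
Qed.
Lemma cabsN (R : realType) (z : R[i]) : cabs (- z) = cabs z.
Proof. exact: normcN. Qed.

Lemma step_ii (R : realType) (G : finZmodType) (ghat : seq {ffun G -> R[i]})
   (Sigma : {pred {ffun G -> R[i]}}) (Fc : {ffun G -> R[i]} -> R[i]) q :
  1 <= q ->
  (\sum_(chi <- ghat) cabs (Fc chi) `^ q) `^ q^-1 <=
  LnormD q ghat Sigma Fc + LnormD q ghat [pred chi | chi \notin Sigma] Fc.
Proof.
move=> q1; have q0 : 0 < q by apply: lt_le_trans q1.
rewrite /LnormD (bigID Sigma) /=.
set a := \sum_(i <- ghat | true && Sigma i) _.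
set b := \sum_(i <- ghat | true && ~~ Sigma i) _.
have a0 : 0 <= a by apply: sumr_ge0 => i _; apply: powR_ge0.
have b0 : 0 <= b by apply: sumr_ge0 => i _; apply: powR_ge0.
have t01 : 0 < q^-1 <= 1 by rewrite invr_gt0 q0 invf_le1.
exact: (powR_subadd R a b (q^-1) a0 b0 t01).
Qed.

Lemma step_iii (R : realType) (G : finZmodType) (ghat : seq {ffun G -> R[i]})
   (Sigma : {pred {ffun G -> R[i]}}) (S : {set G}) (g : G -> R[i]) (p q rho M : R) :
  1 <= p -> 0 <= rho -> 0 <= M -> restriction_estimate ghat Sigma p q rho ->
  (forall x, x \notin S -> g x = 0) -> (forall x, x \in S -> cabs (g x) <= M) ->
  LnormD q ghat Sigma (fun chi => fourier g chi) <= rho * (#|S|%:R `^ p^-1 * M).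
Proof.
move=> p1 rho0 M0 Hrest g0 gM; have p0 : 0 < p by apply: lt_le_trans p1.
apply: le_trans (Hrest g) _; apply: ler_wpM2l => //.
rewrite /LnormG.
apply: (@le_trans _ _ ((\sum_(x in S) M `^ p) `^ p^-1)).
  apply: ge0_ler_powR.
  - by rewrite invr_ge0 ltW.
  - by rewrite nnegrE; apply: sumr_ge0 => i _; apply: powR_ge0.
  - by rewrite nnegrE; apply: sumr_ge0 => i _; apply: powR_ge0.
  rewrite [X in _ <= X]big_mkcond; apply: ler_sum => x _.
  case: ifP => hx.
    apply: ge0_ler_powR; first exact: ltW p0.
    - by rewrite nnegrE cabs_ge0.
    - by rewrite nnegrE (le_trans (cabs_ge0 _) (gM x hx)).
    exact: gM.
  by rewrite g0 ?hx // cabs0 powR0 // gt_eqF.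
rewrite sumr_const -[M `^ p *+ _]mulr_natr powRM ?powR_ge0 ?ler0n //.
by rewrite -powRrM mulfV ?gt_eqF // powRr1 // mulrC.
Qed.

Lemma step_iv (R : realType) (G : finZmodType) (ghat : seq {ffun G -> R[i]})
   (Sigma : {pred {ffun G -> R[i]}}) (Fc : {ffun G -> R[i]} -> R[i]) q :
  1 <= q <= 2 ->
  LnormD q ghat [pred chi | chi \notin Sigma] Fc <=
  (size [seq chi <- ghat | chi \notin Sigma])%:R `^ (q^-1 - 2^-1) *
  LnormD 2 ghat [pred chi | chi \notin Sigma] Fc.
Proof.
move=> /andP[q1 q2]; have q0 : 0 < q by apply: lt_le_trans q1.
set P := [pred chi | chi \notin Sigma].
have := pm_pred R _ ghat P (fun chi => cabs (Fc chi) `^ 2) (q / 2)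
          (fun i => powR_ge0 _ _).
rewrite divr_gt0 // ler_pdivrMr // mul1r q2 => /(_ isT).
have two0 : (2 : R) != 0 by rewrite pnatr_eq0.
have e2 : forall z : R, (z `^ 2) `^ (q / 2) = z `^ q.
  by move=> z; rewrite -powRrM mulrCA mulfV // mulr1.
under eq_bigr do rewrite e2.
move=> h.
rewrite /LnormD.
apply: (le_trans (ge0_ler_powR _ _ _ h)).
- by rewrite invr_ge0 ltW.
- by rewrite nnegrE; apply: sumr_ge0 => i _; apply: powR_ge0.
- by rewrite nnegrE mulr_ge0 ?powR_ge0.
rewrite powRM ?powR_ge0 // -!powRrM size_filter.
have -> : (1 - q / 2) * q^-1 = q^-1 - 2^-1 by field; rewrite gt_eqF.
have -> : q / 2 * q^-1 = 2^-1 by field; rewrite gt_eqF.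
by [].
Qed.

Lemma fourierD (R : realType) (G : finZmodType) (f g h : G -> R[i]) chi :
  (forall x, f x = g x + h x) -> fourier f chi = fourier g chi + fourier h chi.
Proof.
move=> hf; rewrite /fourier -mulrDr -big_split /=; congr (_ * _).
by apply: eq_bigr => x _; rewrite hf mulrDl.
Qed.

Lemma sum_pred_le (R : realType) (I : Type) (r : seq I) (P : pred I) (F : I -> R) :
  (forall i, 0 <= F i) -> \sum_(i <- r | P i) F i <= \sum_(i <- r) F i.
Proof.
move=> F0; rewrite [X in _ <= X](bigID P) /= lerDl.
by apply: sumr_ge0 => i _.
Qed.

Lemma step_v (R : realType) (G : finZmodType) (ghat : seq {ffun G -> R[i]})
   (Sigma : {pred {ffun G -> R[i]}}) (S : {set G}) (f : G -> R[i]) :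
  enumerates_dual ghat ->
  Num.sqrt (\sum_(chi <- ghat | chi \notin Sigma)
              cabs (fourier (fun x => if x \in S then f x else 0) chi) ^+ 2) <=
  LnormD 2 ghat [pred chi | chi \notin Sigma] (fun chi => fourier f chi) +
  LnormG 2 [pred x | x \notin S] f.
Proof.
move=> Hd.
set g := fun x => if x \in S then f x else 0.
set hh := fun x => if x \in S then 0 else f x.
have fgh : forall x, f x = g x + hh x.
  by move=> x; rewrite /g /hh; case: (x \in S); rewrite ?addr0 ?add0r.
rewrite /LnormD /LnormG !L2_sqrt; try by move=> i; apply: cabs_ge0.
apply: le_trans (mink_seq R _ ghat _ (fun chi => cabs (fourier f chi))
  (fun chi => cabs (fourier hh chi)) _ _ _ _ _) _.
- by move=> i; apply: cabs_ge0.
- by move=> i; apply: cabs_ge0.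
- by move=> i; apply: cabs_ge0.
- move=> chi; rewrite (_ : fourier g chi = fourier f chi + - fourier hh chi).
    by apply: le_trans (cabsD _ _) _; rewrite cabsN.
  by rewrite (fourierD chi fgh) addrK.
rewrite lerD2l.
apply: (@le_trans _ _ (Num.sqrt (\sum_(chi <- ghat) cabs (fourier hh chi) ^+ 2))).
  by rewrite ler_sqrt ?sumr_ge0 // ?sum_pred_le // => i *; apply: sqr_ge0.
rewrite plancherel // ler_sqrt; last by apply: sumr_ge0 => i _; apply: sqr_ge0.
rewrite [X in X <= _](bigID (fun x => x \in S)) /=.
rewrite big1 ?add0r; last by move=> x hx; rewrite /hh hx cabs0 expr0n.
rewrite le_eqVlt; apply/orP; left; apply/eqP.
apply: eq_big => [x|x hx]; first by rewrite inE.
by rewrite /hh (negbTE hx).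
Qed.
Lemma alg2 (R : realType) (B F s k d : R) : 0 <= F -> 0 < d -> 0 <= s -> 0 <= k ->
  B + s * (k * (F + B) / d) <= (1 + s * k / d) * (B + F).
Proof.
move=> F0 d0 s0 k0.
rewrite (_ : s * (k * (F + B) / d) = s * k / d * (B + F)); last by ring.
rewrite mulrDl mul1r; lra.
Qed.

Lemma alg1 (R : realType) (X Y Z M : R) : X * M <= Y * M + Z -> M * (X - Y) <= Z.
Proof. move=> h; nra. Qed.

Theorem theorem3p1 (R : realType) (G : finZmodType) (ghat : seq {ffun G -> R[i]})
  (Sigma : {pred {ffun G -> R[i]}}) (S : {set G}) (p q rho : R) :
  enumerates_dual ghat ->
  1 <= p <= 2 -> 1 <= q <= 2 ->
  restriction_estimate ghat Sigma p q rho ->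
  rho * (#|S|%:R `^ p^-1) < (#|G|%:R) `^ (q^-1 - 2^-1) ->
  forall f : G -> R[i],
    LnormG 2 [pred x | true] f <=
      (1 + (#|S|%:R `^ 2^-1) *
             ((size [seq chi <- ghat | chi \notin Sigma])%:R `^ (q^-1 - 2^-1)) /
           ((#|G|%:R) `^ (q^-1 - 2^-1) - rho * (#|S|%:R `^ p^-1)))
      * (LnormG 2 [pred x | x \notin S] f
         + LnormD 2 ghat [pred chi | chi \notin Sigma] (fun chi => fourier f chi)).
Proof.
move=> Hd /andP[p1 p2] hq Hrest Hlt f.
have /andP[q1 q2] := hq.
have p0 : 0 < p by apply: lt_le_trans p1.
have q0 : 0 < q by apply: lt_le_trans q1.
set a1 := q^-1 - 2^-1.
set n := (#|G|%:R : R).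
set sS := (#|S|%:R : R).
set K := ((size [seq chi <- ghat | chi \notin Sigma])%:R : R).
set B := LnormG 2 [pred x | x \notin S] f.
set F := LnormD 2 ghat [pred chi | chi \notin Sigma] (fun chi => fourier f chi).
set D0 := n `^ a1 - rho * sS `^ p^-1.
have D0pos : 0 < D0 by rewrite subr_gt0.
have B0 : 0 <= B by apply: powR_ge0.
have F0 : 0 <= F by apply: powR_ge0.
have n0 : 0 < n by rewrite ltr0n card_pos.
have rho0 : 0 <= rho.
  have := Hrest (fun _ => 1).
  rewrite /LnormG.
  have one_p : (1 : R) `^ p = 1 by rewrite powR1.
  under eq_bigr do rewrite cabs1 one_p.
  rewrite sumr_const.
  have -> : #|[pred x : G | true]| = #|G| by apply: eq_card => x; rewrite !inE.
  move=> h; have := le_trans (powR_ge0 _ _) h.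
  by rewrite pmulr_lge0 // powR_gt0.
pose g := fun x => if x \in S then f x else 0.
set Mb := K `^ a1 * (F + B) / D0.
have claim : forall x, x \in S -> cabs (f x) <= Mb.
  move=> x0 hx0.
  have [xm hxm hmax] := @exists_max R G (fun x => x \in S) (fun x => cabs (f x)) x0 hx0.
  set M := cabs (f xm).
  have M0 : 0 <= M by apply: cabs_ge0.
  have gM : forall x, x \in S -> cabs (g x) <= M by move=> x hx; rewrite /g hx; exact: hmax.
  have g0 : forall x, x \notin S -> g x = 0 by move=> x hx; rewrite /g (negbTE hx).
  have h1 := step_i g xm Hd hq.
  have h2 := step_ii ghat Sigma (fun chi => fourier g chi) q1.
  have h3 := step_iii p1 rho0 M0 Hrest g0 gM.
  have h4 := step_iv ghat Sigma (fun chi => fourier g chi) hq.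
  have h5 := step_v Sigma S f Hd.
  rewrite /LnormD L2_sqrt in h4; last by move=> i; apply: cabs_ge0.
  rewrite /g hxm -/M in h1.
  have h6 : n `^ a1 * M <= rho * (sS `^ p^-1 * M) + K `^ a1 * (F + B).
    apply: (le_trans h1); apply: (le_trans h2); apply: lerD => //.
    apply: (le_trans h4); apply: ler_wpM2l; first exact: powR_ge0.
    exact: h5.
  apply: (le_trans (hmax x0 hx0)).
  rewrite /Mb ler_pdivlMr // /D0.
  apply: alg1; by rewrite mulrA in h6.
have Mb0 : 0 <= Mb.
  rewrite /Mb divr_ge0 ?(ltW D0pos) // mulr_ge0 ?addr_ge0 //; exact: powR_ge0.
have hA : LnormG 2 [pred x | true] f <= B + sS `^ 2^-1 * Mb.
  have e : \sum_(x in [pred x | true]) cabs (f x) `^ 2 =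
     \sum_(x in S) cabs (f x) `^ 2 + \sum_(x in [pred x | x \notin S]) cabs (f x) `^ 2.
    rewrite (bigID (fun x => x \in S)) /=; congr (_ + _); apply: eq_bigl => x; by rewrite !inE.
  rewrite /LnormG e.
  set u := \sum_(x in S) cabs (f x) `^ 2.
  set v := \sum_(x in [pred x | x \notin S]) cabs (f x) `^ 2.
  have u0 : 0 <= u by apply: sumr_ge0 => x _; apply: powR_ge0.
  have v0 : 0 <= v by apply: sumr_ge0 => x _; apply: powR_ge0.
  have t01 : 0 < (2^-1 : R) <= 1 by rewrite invr_gt0 ltr0n invf_le1 ?ltr0n // ler1n.
  have hsub := powR_subadd R u v (2^-1) u0 v0 t01.
  apply: (le_trans hsub); rewrite addrC lerD2l.
  have hu : u <= \sum_(x in S) Mb `^ 2.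
    apply: ler_sum => x hx; apply: ge0_ler_powR; first by [].
    - by rewrite nnegrE cabs_ge0.
    - by rewrite nnegrE.
    exact: claim.
  apply: (le_trans (ge0_ler_powR _ _ _ hu)).
  - by rewrite invr_ge0.
  - by rewrite nnegrE.
  - by rewrite nnegrE sumr_ge0 // => x _; apply: powR_ge0.
  rewrite sumr_const -[Mb `^ 2 *+ _]mulr_natr powRM ?powR_ge0 ?ler0n // -powRrM mulfV ?pnatr_eq0 //.
  by rewrite powRr1 // mulrC.
apply: (le_trans hA); rewrite /Mb.
apply: alg2 => //; exact: powR_ge0.
Qed.
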